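(* An element $\omega\in B_k$ is a zero divisor if and only if there exist $w_1,\dots,w_k$ with $w_i\in\{v_i,1-v_i\}$ for $1\le i\le k$ such that $\omega$ belongs to the ideal $\langle w_1,w_2,\dots,w_k\rangle$ of $B_k$.
   Context: Let $p$ be a prime, $r\ge 1$ an integer, and $\mathbb{F}_{p^r}$ the finite field with $p^r$ elements. For an integer $k\ge 1$, $B_k$ denotes the commutative ring $B_k=\mathbb{F}_{p^r}[v_1,\dots,v_k]/\langle v_i^2-v_i,\ v_iv_j-v_jv_i : 1\le i,j\le k\rangle$. An element $\omega$ is a zero divisor if $\omega b=0$ for some nonzero $b\in B_k$. *)

(* Defs.v *)
From HB Require Import structures.
From mathcomp Require Import all_boot all_algebra all_field.
From mathcomp Require Import mpoly.
Set Implicit Arguments. Unset Strict Implicit. Unset Printing Implicit Defensive.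
Import GRing.Theory.
Local Open Scope ring_scope.

(* B_k = F[v_1,...,v_k] / < v_i^2 - v_i, v_i v_j - v_j v_i >.
   We work in the commutative polynomial ring {mpoly F[k]} (so the
   commutator relations v_i v_j - v_j v_i are already 0), with the variable
   v_i rendered as 'X_i for i : 'I_k, and represent elements of B_k by
   polynomial representatives. *)

Definition in_ideal (R : comNzRingType) (gens : seq R) (x : R) : Prop :=
  exists cs : seq R, x = \sum_(i < size gens) cs`_i * gens`_i.

Definition Bk_rels (F : fieldType) (k : nat) : seq {mpoly F[k]} :=
  [seq 'X_i ^+ 2 - 'X_i | i <- enum 'I_k].

Definition Bk_eq (F : fieldType) (k : nat) (a b : {mpoly F[k]}) : Prop :=
  in_ideal (Bk_rels F k) (a - b).

Definition Bk_zero_divisor (F : fieldType) (k : nat) (omega : {mpoly F[k]}) : Prop :=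
  exists b : {mpoly F[k]}, ~ Bk_eq b 0 /\ Bk_eq (omega * b) 0.

Definition w_choice (F : fieldType) (k : nat) (s : 'I_k -> bool) (i : 'I_k)
  : {mpoly F[k]} := if s i then 'X_i else 1 - 'X_i.

(* the class of omega lies in the ideal <w_1,...,w_k> of B_k; its preimage in
   the polynomial ring is generated by the w_i together with the relations *)
Definition Bk_in_ideal_w (F : fieldType) (k : nat) (s : 'I_k -> bool)
  (omega : {mpoly F[k]}) : Prop :=
  in_ideal (Bk_rels F k ++ [seq w_choice F s i | i <- enum 'I_k]) omega.

(* Main.v *)
Require Import Defs.
From HB Require Import structures.
From mathcomp Require Import all_boot all_algebra all_field.
From mathcomp Require Import mpoly.
Set Implicit Arguments. Unset Strict Implicit. Unset Printing Implicit Defensive.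
Local Open Scope ring_scope.
Import GRing.Theory.

Section Ideal.
Variable R : comNzRingType.
Implicit Types (G H : seq R) (x y : R).

Lemma in_idealP G x :
  in_ideal G x <-> exists c : 'I_(size G) -> R, x = \sum_i c i * G`_i.
Proof.
split=> [[cs ->]|[c ->]]; first by exists (fun i => cs`_i).
exists [seq c i | i <- enum 'I_(size G)]; apply: eq_bigr => i _.
have hi : (i < size (enum 'I_(size G)))%N by rewrite size_enum_ord.
by rewrite (nth_map i) // nth_ord_enum.
Qed.

Lemma ideal0 G : in_ideal G 0.
Proof. by apply/in_idealP; exists (fun=> 0); rewrite big1 // => i _; rewrite mul0r. Qed.

Lemma idealD G x y : in_ideal G x -> in_ideal G y -> in_ideal G (x + y).
Proof.
move=> /in_idealP[c ->] /in_idealP[d ->]; apply/in_idealP.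
by exists (fun i => c i + d i); rewrite -big_split; apply: eq_bigr => i _; rewrite mulrDl.
Qed.

Lemma idealMl G x y : in_ideal G x -> in_ideal G (y * x).
Proof.
move=> /in_idealP[c ->]; apply/in_idealP.
by exists (fun i => y * c i); rewrite mulr_sumr; apply: eq_bigr => i _; rewrite mulrA.
Qed.

Lemma idealMr G x y : in_ideal G x -> in_ideal G (x * y).
Proof. by move=> h; rewrite mulrC; apply: idealMl. Qed.

Lemma idealN G x : in_ideal G x -> in_ideal G (- x).
Proof. by move=> h; rewrite -mulN1r; apply: idealMl. Qed.

Lemma idealB G x y : in_ideal G x -> in_ideal G y -> in_ideal G (x - y).
Proof. by move=> hx hy; apply: idealD => //; apply: idealN. Qed.

Lemma ideal_sum G (I : finType) (f : I -> R) :
  (forall i, in_ideal G (f i)) -> in_ideal G (\sum_i f i).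
Proof.
move=> h; apply: (big_ind (in_ideal G)) => //; first exact: ideal0.
exact: idealD.
Qed.

Lemma ideal_mem G g : g \in G -> in_ideal G g.
Proof.
move=> gG; apply/in_idealP; have hi : (index g G < size G)%N by rewrite index_mem.
exists (fun j => if j == Ordinal hi then 1 else 0).
rewrite (bigD1 (Ordinal hi)) //= eqxx mul1r big1 ?addr0 ?nth_index //.
by move=> j /negPf ->; rewrite mul0r.
Qed.

Lemma ideal_trans G H x y : in_ideal G x ->
  (forall g, g \in G -> in_ideal H (g * y)) -> in_ideal H (x * y).
Proof.
move=> /in_idealP[c ->] h; rewrite mulr_suml; apply: ideal_sum => i.
by rewrite -mulrA; apply: idealMl; apply: h; apply: mem_nth.
Qed.

Lemma ideal_sub G H x : in_ideal G x ->
  (forall g, g \in G -> in_ideal H g) -> in_ideal H x.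
Proof.
by move=> hx h; rewrite -[x]mulr1; apply: (ideal_trans hx) => g /h; rewrite mulr1.
Qed.
End Ideal.

Lemma ideal_eval (F : fieldType) (k : nat) (G : seq {mpoly F[k]}) x v :
  in_ideal G x -> (forall g, g \in G -> g.@[v] = 0) -> x.@[v] = 0.
Proof.
move=> /in_idealP[c ->] h; rewrite raddf_sum big1 // => i _.
by rewrite /= mevalM (h G`_i) ?mulr0 // mem_nth.
Qed.

Section Bk.
Variables (F : fieldType) (k : nat).

Definition ub (b : bool) (i : 'I_k) : {mpoly F[k]} := if b then 'X_i else 1 - 'X_i.
Definition delta (a : 'I_k -> bool) : {mpoly F[k]} := \prod_i ub (a i) i.
Definition pt (a : 'I_k -> bool) : 'I_k -> F := fun i => if a i then 1 else 0.
Local Notation I := (in_ideal (Bk_rels F k)).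

Lemma rel_mem i : ('X_i ^+ 2 - 'X_i) \in Bk_rels F k.
Proof. by apply: (map_f (fun i : 'I_k => 'X_i ^+ 2 - 'X_i)); rewrite mem_enum. Qed.

Lemma XmX i : I ('X_i * (1 - 'X_i)).
Proof.
rewrite mulrBr mulr1 -expr2 -opprB; apply: idealN; apply: ideal_mem; exact: rel_mem.
Qed.

Lemma ub_comp b i : I (ub b i * ub (~~ b) i).
Proof. by case: b; rewrite /ub /=; [apply: XmX | rewrite mulrC; apply: XmX]. Qed.

Lemma delta_ub a i b : b != a i -> I (ub b i * delta a).
Proof.
move=> hb; rewrite /delta (bigD1 i) //= mulrA; apply: idealMr.
have -> : a i = ~~ b by move: hb; case: b; case: (a i).
exact: ub_comp.
Qed.

Lemma sum_delta : \sum_(a : {ffun 'I_k -> bool}) delta a = 1.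
Proof.
rewrite /delta -(bigA_distr_bigA (fun i b => ub b i)) /= big1 // => i _.
by rewrite big_bool /= /ub addrC subrK.
Qed.

Lemma eval_sub (v : 'I_k -> F) (p : {mpoly F[k]}) :
  in_ideal [seq 'X_i - (v i)%:MP | i <- enum 'I_k] (p - (p.@[v])%:MP).
Proof.
set G := [seq _ | i <- _].
pose P (q : {mpoly F[k]}) := in_ideal G (q - (q.@[v])%:MP).
have PD q1 q2 : P q1 -> P q2 -> P (q1 + q2).
  move=> h1 h2; rewrite /P mevalD mpolyCD opprD addrACA; exact: idealD.
have P0 : P 0 by rewrite /P meval0 mpolyC0 subr0; apply: ideal0.
have PM q1 q2 : P q1 -> P q2 -> P (q1 * q2).
  move=> h1 h2; rewrite /P mevalM mpolyCM.
  have -> : q1 * q2 - (q1.@[v])%:MP * (q2.@[v])%:MP =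
     (q1 - (q1.@[v])%:MP) * q2 + (q1.@[v])%:MP * (q2 - (q2.@[v])%:MP).
    by rewrite mulrBl mulrBr addrA subrK.
  by apply: idealD; [apply: idealMr | apply: idealMl].
have PC c : P c%:MP by rewrite /P mevalC subrr; apply: ideal0.
have P1 : P 1 by rewrite -mpolyC1; apply: PC.
have PX i : P 'X_i.
  rewrite /P mevalXU; apply: ideal_mem.
  by apply: (map_f (fun i : 'I_k => 'X_i - (v i)%:MP)); rewrite mem_enum.
rewrite -/(P p) [p]mpolyE; apply: (big_ind P) => //.
move=> m _.
have -> : p@_m *: 'X_[m] = (p@_m)%:MP * 'X_[m] by rewrite mul_mpolyC.
 apply: (PM) => //; rewrite mpolyXE_id.
apply: (big_ind P) => //.
move=> i _; move: (m i) => e; elim: e => [|n IH]; first by rewrite expr0.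
by rewrite exprS; apply: (PM).
Qed.

Lemma eval_delta (a : 'I_k -> bool) (p : {mpoly F[k]}) :
  I ((p - (p.@[pt a])%:MP) * delta a).
Proof.
apply: (ideal_trans (eval_sub (pt a) p)) => g /mapP [i _ ->].
rewrite /pt; case E: (a i).
  rewrite mpolyC1 -opprB mulNr; apply: idealN.
  by apply: (@delta_ub a i false); rewrite E.
by rewrite mpolyC0 subr0; apply: (@delta_ub a i true); rewrite E.
Qed.

Lemma vanish_ideal (p : {mpoly F[k]}) :
  (forall a : {ffun 'I_k -> bool}, p.@[pt a] = 0) -> I p.
Proof.
move=> h; rewrite -[p]mulr1 -sum_delta mulr_sumr; apply: ideal_sum => a.
by have := eval_delta a p; rewrite h mpolyC0 subr0.
Qed.

Lemma ideal_vanish (a : 'I_k -> bool) (x : {mpoly F[k]}) : I x -> x.@[pt a] = 0.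
Proof.
move=> hx; apply: (ideal_eval hx) => g /mapP [i _ ->].
rewrite mevalB rmorphXn /= mevalXU /pt; case: (a i).
  by rewrite expr1n subrr.
by rewrite expr0n subrr.
Qed.

Lemma eval_delta_self (a : 'I_k -> bool) : (delta a).@[pt a] = 1.
Proof.
rewrite /delta rmorph_prod /= big1 // => i _.
rewrite /ub; case E: (a i).
  by rewrite mevalXU /pt E.
by rewrite mevalB meval1 mevalXU /pt E subr0.
Qed.

End Bk.

Theorem lemma2p3 (F : finFieldType) (p r k : nat)
  (hp : prime p) (hr : (0 < r)%N) (hF : #|F| = (p ^ r)%N) (hk : (1 <= k)%N)
  (omega : {mpoly F[k]}) :
  Bk_zero_divisor omega <->
  exists s : 'I_k -> bool, Bk_in_ideal_w s omega.
Proof.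
split.
  move=> [b [nb hb]]; rewrite /Bk_eq subr0 in nb; rewrite /Bk_eq subr0 in hb.
  case: (boolP [exists a : {ffun 'I_k -> bool}, b.@[(@pt F k a)] != 0]); last first.
    move=> /existsPn hn; exfalso; apply: nb; apply: vanish_ideal => a.
    by apply/eqP; move: (hn a); rewrite negbK.
  move=> /existsP [a ha].
  have h0 := @ideal_vanish F k a _ hb; rewrite mevalM in h0.
  have ho : omega.@[(@pt F k a)] = 0.
    by move/eqP: h0; rewrite mulf_eq0 (negPf ha) orbF => /eqP.
  exists (fun i => ~~ a i); rewrite /Bk_in_ideal_w.
  have hw := eval_sub (@pt F k a) omega; rewrite ho mpolyC0 subr0 in hw.
  apply: (ideal_sub hw).
  move=> g /mapP [i _ ->].
  have wm : w_choice F (fun i => ~~ a i) i \in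
     Bk_rels F k ++ [seq w_choice F (fun i => ~~ a i) i | i <- enum 'I_k].
    by rewrite mem_cat; apply/orP; right; apply: map_f; rewrite mem_enum.
  rewrite /w_choice /pt in wm *; case E: (a i); rewrite E /= in wm.
    by rewrite mpolyC1 -opprB; apply: idealN; apply: ideal_mem.
  by rewrite mpolyC0 subr0; apply: ideal_mem.
move=> [s hs]; pose a := fun i => ~~ s i.
exists (@delta F k a); rewrite /Bk_eq !subr0; split.
  move=> h; have := @ideal_vanish F k a _ h; rewrite eval_delta_self => /eqP.
  by rewrite oner_eq0.
apply: (ideal_trans hs) => g; rewrite mem_cat => /orP [hg|/mapP [i _ ->]].
  by apply: idealMr; apply: ideal_mem.
by apply: (@delta_ub F k a i (s i)); rewrite /a; case: (s i).
Qed.
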